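(* Let $(X,\tau)$ be a topological space where $X$ is an uncountable set. If $\tau\subseteq\mathcal{C}(X)$, where $\mathcal{C}(X)=\{A\subseteq X: A\text{ is countable or } X\setminus A \text{ is countable}\}$, then every discrete subset of $X$ (discrete in the subspace topology) is countable. *)

(* Defs.v *)
From HB Require Import structures.
From mathcomp Require Import all_boot all_order.
From mathcomp Require Import boolp classical_sets cardinality topology.
Set Implicit Arguments. Unset Strict Implicit. Unset Printing Implicit Defensive.
Local Open Scope classical_set_scope.

Definition cocountable_sets (T : Type) : set (set T) :=
  [set A | countable A \/ countable (~` A)].

Definition discrete_subset (T : topologicalType) (D : set T) : Prop :=
  forall x, D x -> exists U : set T, open U /\ U `&` D = [set x].

(* Main.v *)
Require Import Defs.
From HB Require Import structures.
From mathcomp Require Import all_boot all_order.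
From mathcomp Require Import boolp classical_sets cardinality topology.
Local Open Scope classical_set_scope.

Lemma countableU_ (T : Type) (A B : set T) :
  countable A -> countable B -> countable (A `|` B).
Proof.
move=> cA cB.
have -> : A `|` B = \bigcup_(b in [set: bool]) (if b then A else B).
  apply/seteqP; split => x.
    by case=> Hx; [exists true | exists false].
  by case=> -[] _ /= Hx; [left | right].
apply: bigcup_countable; first exact: countableP.
by case.
Qed.

Lemma countable_subset1 (T : Type) (L : set T) :
  (forall x y, L x -> L y -> x = y) -> countable L.
Proof.
move=> H.
have [[x Lx]|L0] := pselect (exists x, L x).
  apply: (@sub_countable _ _ _ [set x]); last exact: countable1.
  apply: subset_card_le => y Ly; exact: H.
have -> : L = set0.
  by apply/seteqP; split => y // Ly; exfalso; apply: L0; exists y.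
exact: countable0.
Qed.

Definition pbij (T : Type) (D : set T) (R : set (T * T)) :=
  [/\ (forall p q, R p -> R q -> p.1 = q.1 -> p = q),
      (forall p q, R p -> R q -> p.2 = q.2 -> p = q),
      (forall p, R p -> D p.1 /\ D p.2) &
      (forall p q, R p -> R q -> p.1 <> q.2)].

Lemma split_uncountable (T : Type) (D : set T) : ~ countable D ->
  exists D1, D1 `<=` D /\ ~ countable D1 /\ ~ countable (D `\` D1).
Proof.
move=> nD.
have [R [[f1 f2 fD fdisj] Rmax]] : exists R : set (T * T), @pbij T D R /\ forall B, R `<` B -> ~ @pbij T D B.
  apply: Zorn_bigcup => F FP Ftot.
  have common : forall p q, (\bigcup_(X in F) X) p -> (\bigcup_(X in F) X) q ->
      exists X, F X /\ X p /\ X q.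
    move=> p q [X FX Xp] [Y FY Yq].
    have [XY|YX] := Ftot _ _ FX FY.
      by exists Y; split => //; split => //; exact: XY.
    by exists X; split => //; split => //; exact: YX.
  split.
  - move=> p q Pp Pq e; have [X [FX [Xp Xq]]] := common _ _ Pp Pq.
    by have [h _ _ _] := FP _ FX; exact: h.
  - move=> p q Pp Pq e; have [X [FX [Xp Xq]]] := common _ _ Pp Pq.
    by have [_ h _ _] := FP _ FX; exact: h.
  - move=> p [X FX Xp]; by have [_ _ h _] := FP _ FX; exact: h.
  - move=> p q Pp Pq; have [X [FX [Xp Xq]]] := common _ _ Pp Pq.
    by have [_ _ _ h] := FP _ FX; exact: h.
pose dom := fst @` R.
pose ran := snd @` R.
have cdomR : countable dom = countable R.
  apply: eq_countable; apply: inj_card_eq => p q /set_mem Rp /set_mem Rq.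
  exact: f1.
have cranR : countable ran = countable R.
  apply: eq_countable; apply: inj_card_eq => p q /set_mem Rp /set_mem Rq.
  exact: f2.
have L1 : forall x y, (D `\` (dom `|` ran)) x -> (D `\` (dom `|` ran)) y -> x = y.
  move=> x y [Dx nx] [Dy ny]; apply: contrapT => nxy.
  apply: (Rmax (R `|` [set (x, y)])).
    split; first by move=> p Rp; left.
    move=> e; apply: nx; left; exists (x, y) => //.
    by apply: e; right.
  have nxd : forall p, R p -> p.1 <> x by move=> p Rp e; apply: nx; left; exists p.
  have nxr : forall p, R p -> p.2 <> x by move=> p Rp e; apply: nx; right; exists p.
  have nyd : forall p, R p -> p.1 <> y by move=> p Rp e; apply: ny; left; exists p.
  have nyr : forall p, R p -> p.2 <> y by move=> p Rp e; apply: ny; right; exists p.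
  split.
  - move=> p q [Rp|->] [Rq|->] //= e.
    + exact: f1.
    + by exfalso; exact: nxd Rp e.
    + by exfalso; exact: (nxd _ Rq (esym e)).
  - move=> p q [Rp|->] [Rq|->] //= e.
    + exact: f2.
    + by exfalso; exact: nyr Rp e.
    + by exfalso; exact: (nyr _ Rq (esym e)).
  - by move=> p [Rp|->]; [exact: fD|].
  - move=> p q [Rp|->] [Rq|->] //=.
    + exact: fdisj.
    + exact: nyd.
    + by move=> e; exact: (nxr _ Rq (esym e)).
have cD : countable R -> countable D.
  move=> cR.
  apply: (@sub_countable _ _ _ ((dom `|` ran) `|` (D `\` (dom `|` ran)))).
    apply: subset_card_le => x Dx.
    by have [h|h] := pselect ((dom `|` ran) x); [left|right].
  apply: countableU_; last exact: countable_subset1.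
  by apply: countableU_; [rewrite cdomR|rewrite cranR].
exists dom; split; first by move=> _ [p Rp <-]; have [] := fD _ Rp.
split; first by rewrite cdomR => /cD.
move=> cr; apply/nD/cD; rewrite -cranR.
apply: (@sub_countable _ _ _ (D `\` dom)) => //.
apply: subset_card_le => _ [p Rp <-]; split; first by have [] := fD _ Rp.
by move=> [q Rq e]; exact: (fdisj _ _ Rq Rp e).
Qed.

Theorem lemma3p7 (T : topologicalType) :
  ~ countable [set: T] ->
  (forall A : set T, open A -> cocountable_sets A) ->
  forall D : set T, discrete_subset D -> countable D.
Proof.
move=> _ Hop D Hdisc; apply: contrapT => nD.
have [D1 [D1D [nD1 nD2]]] := @split_uncountable T D nD.
pose I := [set U : set T | open U /\ exists x, D1 x /\ U `&` D = [set x]].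
pose V := \bigcup_(U in I) U.
have oV : open V by apply: bigcup_open => U [].
have VD : V `&` D = D1.
  apply/seteqP; split.
    move=> y [[U [_ [x [D1x UD]]] Uy] Dy].
    have : (U `&` D) y by [].
    by rewrite UD => ->.
  move=> x D1x; have Dx := D1D _ D1x.
  have [U [oU UD]] := Hdisc x Dx.
  split => //; exists U; first by split => //; exists x.
  have : (U `&` D) x by rewrite UD.
  by case.
have [cV|cV] := Hop V oV.
  apply: nD1; apply: (@sub_countable _ _ _ V) => //.
  by apply: subset_card_le; rewrite -VD => y [].
apply: nD2; apply: (@sub_countable _ _ _ (~` V)) => //.
apply: subset_card_le => y [Dy nD1y] Vy; apply: nD1y.
by rewrite -VD.
Qed.
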